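(* Let $n$ be an even positive integer. Then $C_{1/6}(\mathrm{1v2Cycle})\ge\frac n4$, where $\mathrm{1v2Cycle}$ is on $n$ vertices.
   Context: Graphs on vertex set $\{1,\dots,n\}$ are encoded as $x\in\{0,1\}^N$, $N=\binom n2$, one bit per unordered pair indicating presence of the edge. $\mathrm{1v2Cycle}:\Delta\to\{0,1\}$ is defined on the set $\Delta$ of graphs that are either a single cycle of length $n$ (value $1$) or a disjoint union of two cycles each of length $n/2$ (value $0$). For a partial $g:\Delta\to\{0,1\}$, the canonical distribution $\mathcal{D}_g$ on $\Delta$ outputs with probability $1/2$ a uniform element of $g^{-1}(1)$ and with probability $1/2$ a uniform element of $g^{-1}(0)$. A certificate of $f:\Delta\to\{0,1\}$ on $x\in\Delta$ is a set $C\subseteq\{1,\dots,N\}$ such that every $y\in\Delta$ with $y|_C=x|_C$ has $f(y)=f(x)$; $C(f)=\max_{x\in\Delta}\min\{|C|:C\text{ certificate on }x\}$. The $\delta$-approximate certificate complexity is $C_\delta(g)=\min\{C(f): f:\Delta\to\{0,1\},\ \Pr_{x\sim\mathcal{D}_g}[f(x)\ne g(x)]\le\delta\}$. *)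

(* Defs.v *)
From mathcomp Require Import all_boot all_order all_algebra.
Set Implicit Arguments. Unset Strict Implicit. Unset Printing Implicit Defensive.
Import Order.TTheory GRing.Theory Num.Theory.

(* Inputs are x : {ffun I -> bool}, I a finite coordinate type;
   a partial function is given by its domain Dom and a total function
   whose values outside Dom are irrelevant. *)

Section Generic.
Variable I : finType.
Notation input := {ffun I -> bool}.

Definition is_cert (Dom : {set input}) (f : input -> bool) (x : input)
  (C : {set I}) : bool :=
  [forall y in Dom, [forall i in C, y i == x i] ==> (f y == f x)].

(* min{|C| : C certificate on x}; the full coordinate set is always a
   certificate, so the neutral element #|I| does not affect the min. *)
Definition cert_min (Dom : {set input}) (f : input -> bool) (x : input) : nat :=
  \big[minn/#|I|]_(C : {set I} | is_cert Dom f x C) #|C|.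

Definition cert_complexity (Dom : {set input}) (f : input -> bool) : nat :=
  \max_(x in Dom) cert_min Dom f x.

(* Pr_{x ~ D_g}[f x <> g x], D_g the canonical (balanced) distribution. *)
Local Open Scope ring_scope.
Definition canon_err (Dom : {set input}) (g f : input -> bool) : rat :=
  ((1 / 2)%R : rat) * ((#|[set x in Dom | g x && ~~ f x]|)%:R
              / (#|[set x in Dom | g x]|)%:R)
  + ((1 / 2)%R : rat) * ((#|[set x in Dom | ~~ g x && f x]|)%:R
              / (#|[set x in Dom | ~~ g x]|)%:R).

(* C_delta(g) = min { C(f) : Pr_{D_g}[f <> g] <= delta }.
   (g itself is feasible, and C(f) <= #|I|, so #|I| is a harmless neutral.) *)
Definition approx_cert (Dom : {set input}) (g : input -> bool) (delta : rat)
  : nat :=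
  \big[minn/#|I|]_(f : {ffun input -> bool} | (canon_err Dom g f <= delta)%R)
     cert_complexity Dom f.
Local Close Scope ring_scope.
End Generic.

Definition Pair (n : nat) := {A : {set 'I_n} | #|A| == 2}.
Definition Graph (n : nat) := {ffun Pair n -> bool}.

Definition cyc_has (n : nat) (s : seq 'I_n) (e : Pair n) : bool :=
  has (fun v => val e == [set v; next s v]) s.

Definition single_cycle (n : nat) (x : Graph n) : bool :=
  [exists s : n.-tuple 'I_n,
     [&& uniq s, 3 <= n & [forall e, x e == cyc_has s e]]].

Definition two_cycles (n : nat) (x : Graph n) : bool :=
  [exists s1 : (n./2).-tuple 'I_n, exists s2 : (n./2).-tuple 'I_n,
     [&& uniq (val s1 ++ val s2), 3 <= n./2 &
         [forall e, x e == cyc_has s1 e || cyc_has s2 e]]].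

Definition Delta (n : nat) : {set Graph n} :=
  [set x | single_cycle x || two_cycles x].
Definition oneVtwoCycle (n : nat) (x : Graph n) : bool := single_cycle x.

(* Main.v *)
Require Import Defs.
From mathcomp Require Import all_boot all_order all_algebra all_fingroup zify ring lra.
Import Order.TTheory GRing.Theory Num.Theory.
Set Implicit Arguments. Unset Strict Implicit. Unset Printing Implicit Defensive.

Lemma next_iota a b x : a <= x < a + b ->
  next (iota a b) x = if x.+1 == a + b then a else x.+1.
Proof.
move=> /andP[hax hxb].
have hin : x \in iota a b by rewrite mem_iota hax hxb.
have hidx : index x (iota a b) = x - a.
  have hx : nth 0 (iota a b) (x - a) = x by rewrite nth_iota; lia.
  by rewrite -{1}hx index_uniq ?size_iota ?iota_uniq //; lia.
rewrite next_nth hin hidx.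
destruct b as [|b]; first by lia.
rewrite /=.
case: (ltnP (x - a) b) => h.
  rewrite nth_iota; last by lia.
  case: eqP; lia.
rewrite nth_default ?size_iota; last by lia.
case: eqP; lia.
Qed.

Lemma val_next_ord n (L : seq 'I_n) j : uniq L ->
  val (next L j) = next (map val L) (val j).
Proof. by move=> u; rewrite (next_map val_inj u). Qed.

Lemma card_setsum (T : finType) (P : pred T) : #|[set x | P x]| = \sum_x (P x : nat).
Proof.
rewrite -sum1_card big_mkcond /=; apply: eq_bigr => x _; rewrite inE.
by case: (P x).
Qed.

Lemma fiber_count (T G : finType) (F : {perm T} -> G) :
  (forall s s' t, F s = F s' -> F (s * t)%g = F (s' * t)%g) ->
  forall A : {set G}, A \subset [set F s | s in [set: {perm T}]] ->
  #|[set s | F s \in A]| * #|[set F s | s in [set: {perm T}]]| = #|A| * #|{perm T}|.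
Proof.
move=> compat.
pose c x := #|[set s | F s == x]|.
have cle : forall s1 s2, c (F s1) <= c (F s2).
  move=> s1 s2; pose t := (s1^-1 * s2)%g.
  rewrite /c -(card_imset _ (mulIg t)).
  apply: subset_leq_card; apply/subsetP => y /imsetP[s hs ->]; rewrite inE.
  move: hs; rewrite inE => /eqP hs.
  by rewrite (compat _ _ t hs) /t mulKVg.
have cconst : forall s, c (F s) = c (F 1%g).
  by move=> s; apply/eqP; rewrite eqn_leq !cle.
have key : forall B : {set G}, B \subset [set F s | s in [set: {perm T}]] ->
    #|[set s | F s \in B]| = #|B| * c (F 1%g).
  move=> B hB; rewrite -sum1_card.
  rewrite (partition_big F (mem B)) /=; last by move=> s; rewrite inE.
  rewrite -sum_nat_const; apply: eq_bigr => x hx.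
  have := subsetP hB x hx => /imsetP[s _ hxs]; subst x.
  rewrite -(cconst s) /c -sum1_card; apply: eq_bigl => s'; rewrite !inE.
  apply/idP/idP => [/andP[] //|/eqP e]; rewrite e hx eqxx //.
move=> A hA; have hall := key _ (subxx _).
have -> : #|{perm T}| = #|[set s | F s \in [set F s | s in [set: {perm T}]]]|.
  by rewrite -cardsT; apply: eq_card => s; rewrite !inE imset_f ?inE.
by rewrite hall (key _ hA) mulnAC mulnA.
Qed.

Lemma cert_exists (I : finType) (Dom : {set {ffun I -> bool}}) f x :
  exists C, is_cert Dom f x C /\ #|C| <= cert_min Dom f x.
Proof.
rewrite /cert_min; apply: (big_ind (fun v => exists C, is_cert Dom f x C /\ #|C| <= v)).
- exists [set: I]; rewrite cardsT; split => //.
  apply/forallP => y; apply/implyP => _; apply/implyP => /forallP h.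
  have -> // : y = x by apply/ffunP => i; have := h i; rewrite inE => /eqP.
- move=> a b [C1 [h1 l1]] [C2 [h2 l2]]; case: (leqP a b) => hab.
    by exists C1.
  by exists C2.
- by move=> C hC; exists C.
Qed.

Ltac split_ifs := repeat match goal with
 | |- context [if ?c then _ else _] =>
    (lazymatch c with context [if _ then _ else _] => fail | _ => idtac end);
    let E := fresh "E" in destruct c eqn:E
 end.

Section Idx.
Variable n : nat.
Local Notation m := (n./2).
Hypothesis hnm : n = m + m.
Hypothesis hm3 : 3 <= m.

Definition succ (j : 'I_n) : 'I_n := next (enum 'I_n) j.
Definition f0 (j : 'I_n) : 'I_n :=
  if j < m then next (take m (enum 'I_n)) j else next (drop m (enum 'I_n)) j.

Lemma val_succ j : (succ j : nat) = if j.+1 == n then 0 else j.+1.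
Proof.
rewrite /succ val_next_ord ?enum_uniq // val_enum_ord next_iota //.
by rewrite add0n ltn_ord.
Qed.

Lemma take_enum_val : map val (take m (enum 'I_n)) = iota 0 m.
Proof. rewrite map_take val_enum_ord take_iota; congr iota; lia. Qed.
Lemma drop_enum_val : map val (drop m (enum 'I_n)) = iota m m.
Proof. rewrite map_drop val_enum_ord drop_iota; congr iota; lia. Qed.

Lemma val_f0 j : (f0 j : nat) =
  (if j < m then (if j.+1 == m then 0 else j.+1)
  else (if j.+1 == n then m else j.+1)).
Proof.
rewrite /f0; case: ifP => h.
  rewrite val_next_ord ?take_uniq ?enum_uniq // take_enum_val next_iota ?add0n //.

rewrite val_next_ord ?drop_uniq ?enum_uniq // drop_enum_val next_iota.
  by rewrite -hnm.
move=> /=; have := ltn_ord j; lia.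
Qed.

Lemma f0_lt j : (f0 j < m) = (j < m).
Proof. rewrite val_f0; have := ltn_ord j; case: ifP; case: ifP => /= *; lia. Qed.

Definition rotv (i : nat) (j : nat) : nat := if j + i < n then j + i else j + i - n.

Definition rotf (i : 'I_m) (j : 'I_n) : 'I_n := insubd j (rotv i j).

Lemma rotv_lt (i : 'I_m) (j : 'I_n) : rotv i j < n.
Proof.
rewrite /rotv; have := ltn_ord i; have := ltn_ord j.
case: (ltnP (j + i) n) => h /= *; lia.
Qed.

Lemma val_rotf i j : (rotf i j : nat) = rotv i j.
Proof. by rewrite /rotf val_insubd rotv_lt. Qed.

Lemma rotf_inj i : injective (rotf i).
Proof.
move=> j1 j2 /(congr1 val); rewrite /= !val_rotf /rotv => h; apply: val_inj => /=.
move: h; have := ltn_ord i; have := ltn_ord j1; have := ltn_ord j2.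
by case: (ltnP (j1 + i) n); case: (ltnP (j2 + i) n) => /= *; lia.
Qed.

Definition rho (i : 'I_m) : {perm 'I_n} := perm (@rotf_inj i).

Lemma rhoE i j : rho i j = rotf i j.
Proof. by rewrite permE. Qed.

Lemma rho_succ i j : rho i (succ j) = succ (rho i j).
Proof.
apply: val_inj; rewrite !rhoE /= (val_rotf i (succ j)) (val_succ (rotf i j)) (val_rotf i j) /rotv (val_succ j).
have := ltn_ord i; have := ltn_ord j; split_ifs; move=> /= *; lia.
Qed.


Definition grp (f : 'I_n -> 'I_n) (s : {perm 'I_n}) (A : {set 'I_n}) : bool :=
  [exists j, A == [set s j; s (f j)]].
Definition Gr f s : Graph n := [ffun e : Pair n => grp f s (val e)].

Lemma cyc_has_map (L : seq 'I_n) (s : {perm 'I_n}) e : uniq L ->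
  cyc_has (map s L) e = has (fun j => val e == [set s j; s (next L j)]) L.
Proof.
move=> uL; rewrite /cyc_has has_map; apply: eq_in_has => j hj /=.
by rewrite (next_map perm_inj uL).
Qed.

Lemma has_enum_exists (P : pred 'I_n) : has P (enum 'I_n) = [exists j, P j].
Proof.
apply/hasP/existsP => [[x _ Px]|[x Px]]; first by exists x.
by exists x; rewrite ?mem_enum.
Qed.

Lemma X_cyc s e : Gr succ s e = cyc_has (map s (enum 'I_n)) e.
Proof. by rewrite ffunE cyc_has_map ?enum_uniq // has_enum_exists. Qed.

Lemma mem_take_enum j : (j \in take m (enum 'I_n)) = (j < m).
Proof. by rewrite -(mem_map val_inj) take_enum_val mem_iota. Qed.
Lemma mem_drop_enum j : (j \in drop m (enum 'I_n)) = (m <= j).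
Proof.
rewrite -(mem_map val_inj) drop_enum_val mem_iota /=.
have := ltn_ord j; case: leqP => /= *; lia.
Qed.

Lemma Y_cyc s e : Gr f0 s e =
  cyc_has (map s (take m (enum 'I_n))) e || cyc_has (map s (drop m (enum 'I_n))) e.
Proof.
rewrite ffunE /grp -has_enum_exists -{1}(cat_take_drop m (enum 'I_n)) has_cat.
rewrite !cyc_has_map ?take_uniq ?drop_uniq ?enum_uniq //.
congr orb; apply: eq_in_has => j hj /=.
  by move: hj; rewrite mem_take_enum /f0 => ->.
by move: hj; rewrite mem_drop_enum /f0 leqNgt => /negbTE ->.
Qed.

Lemma single_X s : single_cycle (Gr succ s).
Proof.
have h : size (map s (enum 'I_n)) == n by rewrite size_map size_enum_ord.
apply/existsP; exists (Tuple h).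
rewrite /= map_inj_uniq ?enum_uniq //; last exact: perm_inj.
have -> : 3 <= n by lia.
by apply/forallP => e; rewrite X_cyc.
Qed.


Lemma two_Y s : two_cycles (Gr f0 s).
Proof.
have h1 : size (map s (take m (enum 'I_n))) == m.
  by rewrite size_map size_takel // size_enum_ord; lia.
have h2 : size (map s (drop m (enum 'I_n))) == m.
  by rewrite size_map size_drop size_enum_ord; apply/eqP; lia.
apply/existsP; exists (Tuple h1); apply/existsP; exists (Tuple h2).
rewrite /= -map_cat cat_take_drop map_inj_uniq ?enum_uniq //; last exact: perm_inj.
rewrite hm3 /=.
by apply/forallP => e; rewrite Y_cyc.
Qed.

Lemma single_inv x : single_cycle x -> exists s, x = Gr succ s.
Proof.
case/existsP => t /and3P[ut _ /forallP hx].
have tinj : injective (tnth t) by apply/tuple_uniqP.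
exists (perm tinj); apply/ffunP => e; rewrite X_cyc (eqP (hx e)).
congr cyc_has; rewrite -{1}(map_tnth_enum t); apply: eq_map => j.
by rewrite permE.
Qed.

Lemma two_inv x : two_cycles x -> exists s, x = Gr f0 s.
Proof.
case/existsP => t1 /existsP[t2 /and3P[ut _ /forallP hx]].
have hs : size (val t1 ++ val t2) == n by rewrite size_cat !size_tuple; apply/eqP; lia.
pose t := Tuple hs.
have tinj : injective (tnth t) by apply/tuple_uniqP.
have hm : map (perm tinj) (enum 'I_n) = val t1 ++ val t2.
  rewrite -[RHS]/(tval t) -(map_tnth_enum t); apply: eq_map => j.
  by rewrite permE.
exists (perm tinj); apply/ffunP => e; rewrite Y_cyc (eqP (hx e)).
rewrite map_take map_drop hm take_size_cat ?size_tuple //.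
by rewrite drop_size_cat ?size_tuple.
Qed.


Lemma pair2 (u v : 'I_n) : u != v -> #|[set u; v]| == 2.
Proof. by rewrite cards2 => ->. Qed.
Definition mkP (u v : 'I_n) (h : u != v) : Pair n := exist _ [set u; v] (pair2 h).

Lemma succ_neq j : succ j != j.
Proof.
apply/eqP => /(congr1 val); rewrite /= val_succ; have := ltn_ord j.
by case: eqP => /= *; lia.
Qed.

Lemma set2_mem (u v w z : 'I_n) : [set u; v] = [set w; z] ->
  u \in [set w; z] /\ v \in [set w; z].
Proof. by move<-; rewrite !inE !eqxx orbT. Qed.

Lemma not_single_Y s : ~~ single_cycle (Gr f0 s).
Proof.
apply/negP => /single_inv [s' hs'].
pose P j := (s^-1)%g (s' j) < m.
have key : forall j, P (succ j) = P j.
  move=> j.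
  have hn : s' j != s' (succ j) by rewrite (inj_eq perm_inj) eq_sym succ_neq.
  have : Gr f0 s (mkP hn) by rewrite hs' ffunE; apply/existsP; exists j.
  rewrite ffunE => /existsP [a /eqP ha].
  have [h1 h2] := set2_mem ha.
  have hP : forall y, y \in [set s a; s (f0 a)] -> ((s^-1)%g y < m) = (a < m).
    by move=> y; rewrite !inE => /orP[]/eqP->; rewrite permK // f0_lt.
  by rewrite /P (hP _ h1) (hP _ h2).
have n0 : 0 < n by lia.
pose j0 := Ordinal n0.
have const : forall k (j : 'I_n), val j = k -> P j = P j0.
  elim=> [|k IH] j hj.
    by have -> : j = j0 by apply: val_inj.
  have hk : k < n by move: hj; have := ltn_ord j; move=> /= *; lia.
  have := IH (Ordinal hk) erefl.
  have -> : j = succ (Ordinal hk).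
    apply: val_inj; rewrite /= val_succ /=; move: hj; have := ltn_ord j; case: eqP => /= *; lia.
  by rewrite key.
have mn : m < n by lia.
have e1 := const _ ((s'^-1)%g (s j0)) erefl.
have e2 := const _ ((s'^-1)%g (s (Ordinal mn))) erefl.
move: e1 e2; rewrite /P !permKV !permK /= => <-.
have -> : 0 < m by lia.
by rewrite ltnn.
Qed.

Definition Jb (j : 'I_n) := (j.+1 == m) || (j.+1 == n).
Definition bad (p : {perm 'I_n}) (A : {set 'I_n}) :=
  [exists j, Jb j && ((A == [set p j; p (succ j)]) || (A == [set p j; p (f0 j)]))].

Lemma succ_f0 j : ~~ Jb j -> succ j = f0 j.
Proof.
rewrite /Jb => hJ; apply: val_inj; rewrite /= val_succ val_f0.
move: hJ; have := ltn_ord j; split_ifs; move=> /= *; lia.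
Qed.

Lemma agree p e : ~~ bad p (val e) -> Gr succ p e = Gr f0 p e.
Proof.
move=> hb; rewrite !ffunE /grp.
apply/existsP/existsP => [][j /eqP hj]; exists j; case hJ: (Jb j).
- by case/negP: hb; apply/existsP; exists j; rewrite hJ hj eqxx.
- by rewrite -succ_f0 ?hJ // hj.
- by case/negP: hb; apply/existsP; exists j; rewrite hJ hj eqxx orbT.
- by rewrite succ_f0 ?hJ // hj.
Qed.

Lemma X_rot i s : Gr succ (rho i * s)%g = Gr succ s.
Proof.
apply/ffunP => e; rewrite !ffunE /grp.
apply/existsP/existsP => [][j hj].
  by exists (rho i j); rewrite !permM rho_succ in hj.
exists ((rho i)^-1 j)%g; rewrite !permM rho_succ permKV //.
Qed.


Definition Rr (i y : nat) := y = i \/ y = i + m \/ (i = 0 /\ (y = m - 1 \/ y = n - 1))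
  \/ (0 < i /\ (y = i - 1 \/ y = i - 1 + m)).
Definition Good (i a b : nat) := (a = i \/ a = i + m \/ b = i \/ b = i + m) /\ Rr i a /\ Rr i b.

Lemma Jb_cases j : Jb j -> ((j : nat) = m - 1 /\ (succ j : nat) = m /\ (f0 j : nat) = 0)
   \/ ((j : nat) = n - 1 /\ (succ j : nat) = 0 /\ (f0 j : nat) = m).
Proof.
rewrite /Jb val_succ val_f0 => hJ; have := ltn_ord j.
case/orP: hJ => /eqP h /= *.
  left; have -> : (j.+1 == n) = false by apply/eqP; lia.
  have -> : j < m by lia.
  by rewrite h eqxx; lia.
right; have -> : (j < m) = false by apply/negbTE; lia.
by rewrite h eqxx; lia.
Qed.

Lemma good_bad (i : 'I_m) j : Jb j ->
  Good i (rho i j) (rho i (succ j)) /\ Good i (rho i j) (rho i (f0 j)).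
Proof.
move=> /Jb_cases hc.
rewrite !rhoE (val_rotf i j) (val_rotf i (succ j)) (val_rotf i (f0 j)) /rotv.
have := ltn_ord i => /= hi.
case: hc => [[-> [-> ->]]|[-> [-> ->]]].
  have -> : m - 1 + i < n by lia.
  have -> : m + i < n by lia.
  have -> : 0 + i < n by lia.
  rewrite /Good /Rr; lia.
have -> : 0 + i < n by lia.
have -> : m + i < n by lia.
case: (ltnP (n - 1 + i) n) => h; rewrite /Good /Rr; lia.
Qed.

Lemma bad_disj (i i' : 'I_m) s A : bad (rho i * s)%g A -> bad (rho i' * s)%g A -> i = i'.
Proof.
have H : forall (i0 : 'I_m) A0, bad (rho i0 * s)%g A0 ->
    exists a b : 'I_n, A0 = [set s a; s b] /\ Good i0 a b.
  move=> i0 A0 /existsP[j /andP[hJ /orP[]/eqP->]].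
    by exists (rho i0 j), (rho i0 (succ j)); rewrite !permM; split => //; case: (good_bad i0 hJ).
  by exists (rho i0 j), (rho i0 (f0 j)); rewrite !permM; split => //; case: (good_bad i0 hJ).
move=> /H[a [b [-> g1]]] /H[c [d [hE g2]]].
have [h1 h2] := set2_mem hE; have [h3 h4] := set2_mem (esym hE).
move: h1 h2 h3 h4; rewrite !inE !(inj_eq perm_inj) -!val_eqE /= => h1 h2 h3 h4.
have hi := ltn_ord i; have hi' := ltn_ord i'.
have step : forall (i0 i1 x : nat), i0 < m -> i1 < m -> (x = i0 \/ x = i0 + m) ->
    Rr i1 x -> (i0 = i1 \/ (i1 = 0 /\ i0 = m - 1) \/ (0 < i1 /\ i0 = i1 - 1)).
  move=> i0 i1 x k0 k1 kx; rewrite /Rr; clear -k0 k1 kx hm3 hnm; lia.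
have m1 : (a : nat) = c \/ (a : nat) = d by case/orP: h1 => /eqP; auto.
have m2 : (b : nat) = c \/ (b : nat) = d by case/orP: h2 => /eqP; auto.
have m3 : (c : nat) = a \/ (c : nat) = b by case/orP: h3 => /eqP; auto.
have m4 : (d : nat) = a \/ (d : nat) = b by case/orP: h4 => /eqP; auto.
case: g1 => g1 [ra rb]; case: g2 => g2 [rc rd].
have S1 : (i : nat) = i' \/ ((i' : nat) = 0 /\ (i : nat) = m - 1) \/ (0 < i' /\ (i : nat) = i' - 1).
  have [x [hx rx]] : exists x : nat, (x = i \/ x = i + m) /\ Rr i' x.
    case: g1 => [g|[g|[g|g]]]; [case: m1|case: m1|case: m2|case: m2] => e;
      rewrite e in g; by [exists c; split => //; auto | exists d; split => //; auto].
  exact: (step _ _ x hi hi' hx rx).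
have S2 : (i' : nat) = i \/ ((i : nat) = 0 /\ (i' : nat) = m - 1) \/ (0 < i /\ (i' : nat) = i - 1).
  have [x [hx rx]] : exists x : nat, (x = i' \/ x = i' + m) /\ Rr i x.
    case: g2 => [g|[g|[g|g]]]; [case: m3|case: m3|case: m4|case: m4] => e;
      rewrite e in g; by [exists a; split => //; auto | exists b; split => //; auto].
  exact: (step _ _ x hi' hi hx rx).
apply: val_inj => /=; clear -S1 S2 hi hi' hm3 hnm; lia.
Qed.


Lemma imset2p (t : {perm 'I_n}) (u v : 'I_n) : t @: [set u; v] = [set t u; t v].
Proof. by rewrite imsetU1 imset_set1. Qed.

Lemma grp_imset f s (t : {perm 'I_n}) (B : {set 'I_n}) : grp f (s * t)%g (t @: B) = grp f s B.
Proof.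
rewrite /grp; apply: eq_existsb => j.
by rewrite !permM -imset2p (inj_eq (imset_inj perm_inj)).
Qed.

Lemma Gr_compat f s s' t : Gr f s = Gr f s' -> Gr f (s * t)%g = Gr f (s' * t)%g.
Proof.
move=> h; apply/ffunP => e; rewrite !ffunE.
have hB : #|(t^-1)%g @: val e| == 2 by rewrite card_imset ?(valP e) //; exact: perm_inj.
have -> : val e = t @: ((t^-1)%g @: val e).
  by rewrite -imset_comp (eq_imset _ (permKV t)) imset_id.
rewrite !grp_imset.
have := congr1 (fun g : Graph n => g (exist (fun A : {set 'I_n} => #|A| == 2) _ hB)) h.
by rewrite /= !ffunE.
Qed.

Definition D1 := [set x in Delta n | oneVtwoCycle x].
Definition D0 := [set x in Delta n | ~~ oneVtwoCycle x].

Lemma D1E : D1 = [set Gr succ s | s in [set: {perm 'I_n}]].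
Proof.
apply/setP => x; rewrite !inE /oneVtwoCycle; apply/idP/idP.
  case/andP => _ /single_inv [s ->]; exact: imset_f.
by case/imsetP => s _ ->; rewrite single_X.
Qed.

Lemma D0E : D0 = [set Gr f0 s | s in [set: {perm 'I_n}]].
Proof.
apply/setP => x; rewrite !inE /oneVtwoCycle; apply/idP/idP.
  case/andP => /orP[-> //|/two_inv [s ->] _]; exact: imset_f.
by case/imsetP => s _ ->; rewrite not_single_Y two_Y orbT.
Qed.


Definition A1 (f : {ffun Graph n -> bool}) :=
  [set x in Delta n | oneVtwoCycle x && ~~ f x].
Definition A0 (f : {ffun Graph n -> bool}) :=
  [set x in Delta n | ~~ oneVtwoCycle x && f x].

Lemma main_ineq (f : {ffun Graph n -> bool}) k :
  (forall x, x \in Delta n -> exists C, is_cert (Delta n) f x C /\ #|C| <= k) ->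
  (#|{perm 'I_n}| - #|[set s | Gr succ s \in A1 f]|) * (m - k)
    <= m * #|[set s | Gr f0 s \in A0 f]|.
Proof.
move=> hcert.
set NB := #|[set s | Gr f0 s \in A0 f]|.
have hNB : forall i : 'I_m, \sum_s (Gr f0 (rho i * s)%g \in A0 f : nat) = NB.
  by move=> i; rewrite /NB (card_setsum (fun s : {perm 'I_n} => Gr f0 s \in A0 f)) [RHS](reindex_inj (mulgI (rho i))).
have -> : m * NB = \sum_(i < m) \sum_s (Gr f0 (rho i * s)%g \in A0 f : nat).
  rewrite (eq_bigr (fun _ => NB)); last by move=> i _; rewrite hNB.
  by rewrite sum_nat_const card_ord.
rewrite exchange_big /=.
have -> : #|{perm 'I_n}| - #|[set s | Gr succ s \in A1 f]|
    = \sum_s (Gr succ s \notin A1 f : nat).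
  have e : \sum_s ((Gr succ s \in A1 f : nat) + (Gr succ s \notin A1 f : nat))
      = #|{perm 'I_n}|.
    by rewrite -sum1_card; apply: eq_bigr => s _; case: (_ \in _).
  by rewrite big_split /= in e; rewrite -e (card_setsum (fun s : {perm 'I_n} => Gr succ s \in A1 f)) addKn.
rewrite big_distrl /=; apply: leq_sum => s _.
case hs: (Gr succ s \in A1 f) => /=; first by rewrite mul0n.
rewrite mul1n.
set x := Gr succ s.
have xD : x \in Delta n by rewrite inE single_X.
have fx : f x = true.
  by move: hs; rewrite inE xD /oneVtwoCycle single_X /=; case: (f x).
have [C [hC hCk]] := hcert x xD.
have hgood : forall i : 'I_m, ~~ [exists e in C, bad (rho i * s)%g (val e)] ->
    Gr f0 (rho i * s)%g \in A0 f.
  move=> i hi; set y := Gr f0 (rho i * s)%g.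
  have yD : y \in Delta n by rewrite inE two_Y orbT.
  have : f y == f x.
    move/forallP: hC => /(_ y); rewrite yD /= => /implyP; apply.
    apply/forallP => e; apply/implyP => eC.
    rewrite /y -agree; first by rewrite X_rot.
    by apply: contra hi => hb; apply/existsP; exists e; rewrite eC hb.
  by rewrite fx => /eqP fy; rewrite inE yD /oneVtwoCycle not_single_Y fy.
have hbad : \sum_(i < m) ([exists e in C, bad (rho i * s)%g (val e)] : nat) <= #|C|.
  apply: (@leq_trans (\sum_(i < m) \sum_(e in C) (bad (rho i * s)%g (val e) : nat))).
    apply: leq_sum => i _; case: existsP => [[e /andP[eC hb]]|] //=.
    by rewrite (bigD1 e) //= hb.
  rewrite exchange_big /= -sum1_card; apply: leq_sum => e eC.
  rewrite -(card_setsum (fun i : 'I_m => bad (rho i * s)%g (val e))); apply/card_le1_eqP => i j; rewrite !inE => hi hj.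
  exact: bad_disj hj hi.
have : m <= \sum_(i < m) (Gr f0 (rho i * s)%g \in A0 f : nat)
        + \sum_(i < m) ([exists e in C, bad (rho i * s)%g (val e)] : nat).
  rewrite -big_split /= -{1}(card_ord m) -sum1_card; apply: leq_sum => i _.
  case hb: [exists e in C, _]; first by rewrite addn1.
  by rewrite hgood ?hb.
move=> h3; rewrite leq_subLR; apply: (leq_trans h3); rewrite addnC leq_add2r; exact: leq_trans hbad hCk.
Qed.


Lemma pair_card : n.-1 <= #|{: {A : {set 'I_n} | #|A| == 2}}|.
Proof.
have n0 : 0 < n by lia.
pose j0 := Ordinal n0.
rewrite card_sig.
have <- : #|[set [set j0; j] | j in [set~ j0]]| = n.-1.
  rewrite card_in_imset ?cardsC1 ?card_ord // => j1 j2.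
  rewrite !inE => h1 h2 e.
  have := set2_mem e => [[_]]; rewrite !inE (negbTE h1) /= => /eqP //.
apply: subset_leq_card; apply/subsetP => A /imsetP[j hj ->].
rewrite inE cards2; rewrite !inE in hj; by rewrite (eq_sym j0) hj.
Qed.

Lemma count_rat (NA a d N : nat) : (0 < d)%N -> (0 < N)%N -> NA * d = a * N ->
  ((a%:R / d%:R)%R : rat) = (NA%:R / N%:R)%R.
Proof.
move=> hd hN h; apply/eqP; rewrite eqr_div ?pnatr_eq0 -?lt0n //.
by rewrite -!natrM h.
Qed.


Lemma feasible_bound (f : {ffun Graph n -> bool}) :
  (canon_err (Delta n) (@oneVtwoCycle n) f <= 1 / 6)%R ->
  n <= 4 * cert_complexity (Delta n) f.
Proof.
move=> herr; set k := cert_complexity (Delta n) f.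
rewrite leqNgt; apply/negP => hk.
have hcert : forall x, x \in Delta n -> exists C, is_cert (Delta n) f x C /\ #|C| <= k.
  move=> x xD; have [C [hC hCl]] := cert_exists (Delta n) f x.
  by exists C; split => //; apply: (leq_trans hCl); exact: (leq_bigmax_cond x xD).
have hmain := main_ineq hcert.
have hN : 0 < #|{perm 'I_n}| by apply/card_gt0P; exists 1%g.
have hfa : #|[set s | Gr succ s \in A1 f]| * #|D1| = #|A1 f| * #|{perm 'I_n}|.
  rewrite D1E; apply: fiber_count; first exact: Gr_compat.
  rewrite -D1E; apply/subsetP => x; rewrite !inE => /andP[-> /andP[-> _]] //.
have hfb : #|[set s | Gr f0 s \in A0 f]| * #|D0| = #|A0 f| * #|{perm 'I_n}|.
  rewrite D0E; apply: fiber_count; first exact: Gr_compat.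
  rewrite -D0E; apply/subsetP => x; rewrite !inE => /andP[-> /andP[-> _]] //.
have hd1 : 0 < #|D1| by apply/card_gt0P; exists (Gr succ 1%g); rewrite D1E imset_f.
have hd0 : 0 < #|D0| by apply/card_gt0P; exists (Gr f0 1%g); rewrite D0E imset_f.
have e1 := count_rat hd1 hN hfa.
have e0 := count_rat hd0 hN hfb.
move: herr; rewrite /canon_err -/(A1 f) -/(A0 f) -/D1 -/D0 e1 e0 => herr.
set NA := #|[set s | Gr succ s \in A1 f]| in hmain herr.
set NB := #|[set s | Gr f0 s \in A0 f]| in hmain herr.
set N := #|{perm 'I_n}| in hmain herr hN.
have h3 : 3 * (NA + NB) <= N.
  rewrite -(ler_nat rat) natrM natrD.
  have hN' : (0 < N%:R :> rat)%R by rewrite ltr0n.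
  have hN0 : (N%:R != 0 :> rat)%R by rewrite pnatr_eq0 -lt0n.
  have := ler_wpM2r (ltW hN') herr.
  rewrite mulrDl -!mulrA !mulVf // !mulr1; lra.
move: hmain h3 hk hN; nia.
Qed.

End Idx.

Local Open Scope ring_scope.

Theorem corollary5p12 (n : nat) (hev : ~~ odd n) (hn : (6 <= n)%N) :
  (n%:R / 4 : rat) <= (approx_cert (Delta n) (@oneVtwoCycle n) (1 / 6))%:R.
Proof.
have hnm : n = (n./2 + n./2)%N.
  by rewrite addnn -{1}(odd_double_half n) (negbTE hev).
have hm3 : (3 <= n./2)%N by lia.
have key : forall v, (n <= 4 * v)%N -> (n%:R / 4 : rat) <= v%:R.
  by move=> v hv; rewrite ler_pdivrMr ?ltr0n // -natrM ler_nat mulnC.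
rewrite /approx_cert; apply: (big_ind (fun v => (n%:R / 4 : rat) <= v%:R)).
- apply: key; apply: (leq_trans _ (leq_mul (leqnn 4) (pair_card hnm hm3))); lia.
- by move=> a b ha hb; case: (leqP a b).
- by move=> f hf; apply: key; exact: feasible_bound.
Qed.
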